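(* Let $\mathcal G$ encode a fine mixed subdivision of $n\Delta^{d-1}$ with $n\ge2$, and let $t$ be a lattice point of $(n-2)\Delta^{d-1}$. Then the intersection $\bigcap_{\bar j\in[\bar d]}C(\mathbb T(t+e_{\bar j}))$ of the $d$ cells with positions $t+e_{\bar j}$ consists of exactly one point, and this point is a lattice point.
   Context: Fix positive integers $n,d$; $K_{n,d}$ is the complete bipartite graph with left vertices $[n]$ and right vertices $[\bar d]=\{\bar1,\dots,\bar d\}$; graphs are identified with edge sets; $RD$ denotes the vector of right-vertex degrees, $\mathbf 1$ the all-ones vector in $\mathbb Z^{[\bar d]}$, $e_{\bar j}$ the standard unit vectors of $\mathbb R^d=\mathbb R^{[\bar d]}$; lattice points of $k\Delta^{d-1}$ are vectors in $\mathbb Z_{\ge0}^{[\bar d]}$ with sum $k$. Two acyclic subgraphs are compatible if whenever both contain a perfect matching between the same $I\subseteq[n]$, $\bar J\subseteq[\bar d]$, these matchings coincide. For a subgraph $G$ of $K_{n,d}$ in which every left vertex has positive degree, its cell is the polytope $C(G)=\sum_{i=1}^n\mathrm{conv}\{e_{\bar j}:(i,\bar j)\in G\}\subseteq\mathbb R^d$ (Minkowski sum). A collection $\mathcal G$ of subgraphs of $K_{n,d}$ encodes a fine mixed subdivision of $n\Delta^{d-1}$ (into the cells $C(G)$, $G\in\mathcal G$) if: every $G\in\mathcal G$ is a spanning tree of $K_{n,d}$; (tree linkage) for each $G\in\mathcal G$ and each edge $e\in G$ not incident to a leaf, there are $G'\in\mathcal G$, $G'\neq G$, and $e'\in G'$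 with $G\setminus e=G'\setminus e'$; (compatibility) any two trees of $\mathcal G$ are compatible. It is known that then for each lattice point $u$ of $(n-1)\Delta^{d-1}$ there is exactly one tree $\mathbb T(u)\in\mathcal G$ with $RD(\mathbb T(u))=u+\mathbf 1$ (the cell of position $u$), and these are all the trees of $\mathcal G$. *)

(* Defs.v *)
From HB Require Import structures.
From mathcomp Require Import all_boot all_order all_algebra.
Set Implicit Arguments. Unset Strict Implicit. Unset Printing Implicit Defensive.
Import Order.TTheory GRing.Theory Num.Theory.

(* Subgraphs of K_{n,d}: left vertices 'I_n, right vertices 'I_d (= [\bar d]),
   a graph is its edge set. *)
Definition edge (n d : nat) := ('I_n * 'I_d)%type.
Definition graph (n d : nat) := {set edge n d}.

Definition vert (n d : nat) := ('I_n + 'I_d)%type.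

Definition adj (n d : nat) (G : graph n d) : rel (vert n d) :=
  fun u v => match u, v with
             | inl i, inr j => (i, j) \in G
             | inr j, inl i => (i, j) \in G
             | _, _ => false
             end.

Definition acyclic (n d : nat) (G : graph n d) : Prop :=
  forall s : seq (vert n d), uniq s -> 3 <= size s -> ~~ cycle (adj G) s.

Definition connected (n d : nat) (G : graph n d) : Prop :=
  forall u v : vert n d, connect (adj G) u v.

Definition spanning_tree (n d : nat) (G : graph n d) : Prop :=
  connected G /\ acyclic G.

Definition ldeg (n d : nat) (G : graph n d) (i : 'I_n) : nat :=
  #|[set j : 'I_d | (i, j) \in G]|.
Definition rdeg (n d : nat) (G : graph n d) (j : 'I_d) : nat :=
  #|[set i : 'I_n | (i, j) \in G]|.

Definition RD (n d : nat) (G : graph n d) : 'I_d -> nat := rdeg G.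

Definition incident_to_leaf (n d : nat) (G : graph n d) (e : edge n d) : bool :=
  (ldeg G e.1 == 1) || (rdeg G e.2 == 1).

Definition perfect_matching (n d : nat) (I : {set 'I_n}) (J : {set 'I_d})
  (M : graph n d) : Prop :=
  [/\ forall e, e \in M -> (e.1 \in I) && (e.2 \in J),
      forall i, i \in I -> #|[set j : 'I_d | (i, j) \in M]| = 1 &
      forall j, j \in J -> #|[set i : 'I_n | (i, j) \in M]| = 1].

Definition compatible (n d : nat) (G G' : graph n d) : Prop :=
  forall (I : {set 'I_n}) (J : {set 'I_d}) (M M' : graph n d),
    M \subset G -> M' \subset G' ->
    perfect_matching I J M -> perfect_matching I J M' -> M = M'.

Definition encodes_fms (n d : nat) (GG : {set graph n d}) : Prop :=
  [/\ forall G, G \in GG -> spanning_tree G,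
      forall G e, G \in GG -> e \in G -> ~~ incident_to_leaf G e ->
        exists G', exists e',
          [/\ G' \in GG, G' != G, e' \in G' & G :\ e = G' :\ e'] &
      forall G G', G \in GG -> G' \in GG -> compatible G G'].

(* membership in the cell C(G) = sum_i conv{e_j : (i,j) in G} (Minkowski sum),
   written out: x = sum_i p_i with p_i = sum_j lam i j e_j a convex
   combination of the e_j, (i,j) in G. *)
Definition in_cell (R : realFieldType) (n d : nat) (G : graph n d)
  (x : 'rV[R]_d) : Prop :=
  exists lam : 'I_n -> 'I_d -> R,
    [/\ forall i j, (0 <= lam i j)%R,
        forall i j, (i, j) \notin G -> lam i j = 0,
        forall i, (\sum_(j < d) lam i j = 1)%R &
        forall j, x ord0 j = \sum_(i < n) lam i j]%R.

Definition lattice_pt (d k : nat) (u : 'I_d -> nat) : Prop :=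
  \sum_(j < d) u j = k.

Definition add_unit (d : nat) (u : 'I_d -> nat) (j : 'I_d) : 'I_d -> nat :=
  fun k => u k + (k == j).

(* Main.v *)
Require Import Defs.
From HB Require Import structures.
From mathcomp Require Import all_boot all_order all_algebra.
From mathcomp Require Import zify.
Import Order.TTheory GRing.Theory Num.Theory.
Set Implicit Arguments. Unset Strict Implicit. Unset Printing Implicit Defensive.

Lemma prev_at_last (T : eqType) (x z : T) s : x \notin s -> prev_at x x z s = last z s.
Proof.
elim: s z => [|y s IH] z /=; first by rewrite eqxx.
by rewrite inE negb_or => /andP[/negbTE -> /IH].
Qed.

Lemma next_neq_prev (T : eqType) (c : seq T) x :
  uniq c -> 2 < size c -> x \in c -> next c x != prev c x.
Proof.
move=> Uc Sc xc; case/rot_to: xc => i s Hrot.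
rewrite -(next_rot i Uc) -(prev_rot i Uc) Hrot.
have : uniq (x :: s) by rewrite -Hrot rot_uniq.
have : 2 < size (x :: s) by rewrite -Hrot size_rot.
case: s {Hrot} => [|y [|z s]] //= _.
rewrite !inE !negb_or => /andP[/and3P[xy xz xs] /andP[yzs _]].
rewrite /next /prev /= !eqxx /= (negbTE xy) (negbTE xz) prev_at_last //.
apply/eqP => Hy; move: yzs; rewrite Hy.
have := mem_last z s; rewrite inE => /orP[/eqP->|->]; first by rewrite eqxx.
by rewrite andbF.
Qed.

Section G.
Variables (n d : nat).
Local Notation V := (vert n d).
Implicit Types (G A B : graph n d) (S : {set V}).

Definition darr A B : rel V := fun u v => match u, v with
 | inl i, inr j => (i,j) \in A | inr j, inl i => (i,j) \in B | _,_ => false end.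

Lemma darr_swap A B u v : darr B A u v = darr A B v u.
Proof. by case: u; case: v. Qed.

Lemma darr_irr A B u : darr A B u u = false.
Proof. by case: u. Qed.

Definition touch G S := #|[set e in G | (inl e.1 \in S) || (inr e.2 \in S)]|.
Definition inside G S := #|[set e in G | (inl e.1 \in S) && (inr e.2 \in S)]|.

Lemma crossing G S u w : connected G -> u \in S -> w \notin S ->
  exists e, e \in G /\ (inl e.1 \in S) != (inr e.2 \in S).
Proof.
move=> HG uS wS.
case: (boolP [exists e, (e \in G) && ((inl e.1 \in S) != (inr e.2 \in S))]).
  by case/existsP => e /andP[eG ne]; exists e.
move/negP => Hno.
have Hcl : closed (adj G) S.
  move=> [x|x] [y|y] //=.
    move=> H; apply/eqP; apply/negPn/negP => Hne; apply: Hno.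
    by apply/existsP; exists (x, y); rewrite H.
  move=> H; apply/eqP; apply/negPn/negP => Hne; apply: Hno.
  by apply/existsP; exists (y, x); rewrite H eq_sym.
have := closed_connect Hcl (HG u w).
by rewrite uS (negbTE wS).
Qed.

Lemma setT_neq S : S != setT -> exists w, w \notin S.
Proof.
move=> H; case: (boolP [exists w, w \notin S]); first by case/existsP => w; exists w.
move/existsPn => Hall; case/eqP: H; apply/setP => w.
by rewrite inE; apply/negPn.
Qed.

Lemma touch_step G S x e : e \in G -> x \in S ->
  ((inl e.1 == x) && (inr e.2 \notin S)) || ((inr e.2 == x) && (inl e.1 \notin S)) ->
  touch G (S :\ x) < touch G S.
Proof.
move=> eG xS He; apply: proper_card; apply/properP; split.
  apply/subsetP => f; rewrite !inE => /andP[-> /orP[/andP[_ ->]|/andP[_ ->]]] //.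
  by rewrite orbT.
exists e.
  rewrite !inE eG /=; case/orP: He => /andP[/eqP -> _]; by rewrite xS ?orbT.
rewrite !inE eG /=; case/orP: He => /andP[/eqP Hx /negbTE Hn]; by rewrite Hx eqxx Hn ?andbF.
Qed.

Lemma touch_ge G S : connected G -> S != set0 -> S != setT -> #|S| <= touch G S.
Proof.
move=> HG; move Hk: #|S| => k; elim: k S Hk => [|k IH] S Hk S0 ST //.
case/set0Pn: S0 => u uS; case/setT_neq: ST => w wS.
case: (crossing HG uS wS) => [[i j] [eG /= ne]].
have [x [xS Hx]] : exists x, x \in S /\ touch G (S :\ x) < touch G S.
  case: (boolP (inl i \in S)) ne => iS ne.
    exists (inl i); split => //; apply: (touch_step eG iS).
    by rewrite /= eqxx /= orbF; apply/negP => h; rewrite h in ne.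
  have jS : inr j \in S by apply/negPn/negP => h; rewrite (negbTE h) in ne.
  exists (inr j); split => //; apply: (touch_step eG jS).
  by rewrite /= eqxx /=.
case: k IH Hk => [|k] IH Hk; first by apply: leq_ltn_trans Hx.
have HS' : #|S :\ x| = k.+1 by move: Hk; rewrite (cardsD1 x) xS; case.
have S'0 : S :\ x != set0 by rewrite -card_gt0 HS'.
have S'T : S :\ x != setT by apply/eqP => /setP/(_ x); rewrite !inE eqxx.
have h := IH _ HS' S'0 S'T.
exact: leq_ltn_trans h Hx.
Qed.

Lemma card_V : #|{: V}| = n + d.
Proof. by rewrite card_sum !card_ord. Qed.

Lemma inside_touch G S : #|G| = inside G S + touch G (~: S).
Proof.
rewrite -(cardID [pred e | (inl e.1 \in S) && (inr e.2 \in S)] G) /inside /touch.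
congr (_ + _); apply: eq_card => e; rewrite !inE //.
by rewrite -negb_and andbC.
Qed.

Lemma inside_le G S : connected G -> #|G| = (n + d).-1 -> S != set0 -> S != setT ->
  inside G S <= #|S| - 1.
Proof.
move=> HG cG S0 ST.
have C0 : ~: S != set0 by apply: contra ST => /eqP h; rewrite -(setCK S) h setC0.
have CT : ~: S != setT by apply: contra S0 => /eqP h; rewrite -(setCK S) h setCT.
have h1 := touch_ge HG C0 CT.
have h2 := inside_touch G S.
have h3 : #|~: S| = n + d - #|S| by rewrite cardsCs setCK card_V.
have h4 : #|S| <= n + d by rewrite -card_V max_card.
have h5 : 0 < #|S| by rewrite card_gt0.
lia.
Qed.

Lemma card_right G (P : pred 'I_d) :
  #|[set e in G | P e.2]| = \sum_(k | P k) rdeg G k.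
Proof.
rewrite -sum1dep_card big_mkcond /=.
transitivity (\sum_(e : edge n d) ((((e.1, e.2) \in G) && P e.2) : nat)).
  by apply: eq_bigr => [[i k]] _ /=; case: ifP.
rewrite -(pair_bigA _ (fun i k => (((i, k) \in G) && P k : nat))) /= exchange_big /=.
rewrite [RHS]big_mkcond /=; apply: eq_bigr => k _.
case: (P k); last by rewrite big1 // => i _; rewrite andbF.
rewrite /rdeg -sum1dep_card [RHS]big_mkcond /=; apply: eq_bigr => i _.
by rewrite andbT; case: ifP.
Qed.

Lemma card_graph G : #|G| = \sum_k rdeg G k.
Proof.
rewrite -(card_right G predT); apply: eq_card => e; by rewrite !inE andbT.
Qed.

Lemma ledge G i (k0 : 'I_d) : connected G -> exists k, (i, k) \in G.
Proof.
move=> HG; case: (boolP [exists k, (i, k) \in G]); first by case/existsP => k; exists k.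
move/existsPn => Hno.
have Hcl : closed (adj G) [pred v : V | if v is inl x then x == i else false].
  move=> [x|x] [y|y] //= H.
    have [exi|ne] := eqVneq x i; [by move: (Hno y); rewrite -exi H | by rewrite !inE /= (negbTE ne)].
  have [eyi|ne] := eqVneq y i; [by move: (Hno x); rewrite -eyi H | by rewrite !inE /= (negbTE ne)].
have := closed_connect Hcl (HG (inl i) (inr k0)).
by rewrite !inE /= eqxx.
Qed.

Lemma redge G k (i0 : 'I_n) : connected G -> exists i, (i, k) \in G.
Proof.
move=> HG; case: (boolP [exists i, (i, k) \in G]); first by case/existsP => i; exists i.
move/existsPn => Hno.
have Hcl : closed (adj G) [pred v : V | if v is inr x then x == k else false].
  move=> [x|x] [y|y] //= H.
    have [eyk|ne] := eqVneq y k; [by move: (Hno x); rewrite -eyk H | by rewrite !inE /= (negbTE ne)].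
  have [exk|ne] := eqVneq x k; [by move: (Hno y); rewrite -exk H | by rewrite !inE /= (negbTE ne)].
have := closed_connect Hcl (HG (inr k) (inl i0)).
by rewrite !inE /= eqxx.
Qed.

Lemma cycle_incompat A B (c : seq V) i : compatible A B -> uniq c ->
  cycle (darr A B) c -> 2 < size c -> inl i \in c -> False.
Proof.
move=> HC Uc Cc Sc ic.
pose I := [set i | inl i \in c]; pose J := [set j | inr j \in c].
pose M := [set e : edge n d | (inl e.1 \in c) && (next c (inl e.1) == inr e.2)].
pose M' := [set e : edge n d | (inl e.1 \in c) && (prev c (inl e.1) == inr e.2)].
have nxt : forall i, inl i \in c -> exists j, next c (inl i) = inr j.
  move=> i0 h; have := next_cycle Cc h; case: (next c (inl i0)) => // j _; by exists j.
have prv : forall i, inl i \in c -> exists j, prev c (inl i) = inr j.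
  move=> i0 h; have := prev_cycle Cc h; case: (prev c (inl i0)) => // j _; by exists j.
have nxtr : forall j, inr j \in c -> exists i, next c (inr j) = inl i.
  move=> i0 h; have := next_cycle Cc h; case: (next c (inr i0)) => // j _; by exists j.
have prvr : forall j, inr j \in c -> exists i, prev c (inr j) = inl i.
  move=> i0 h; have := prev_cycle Cc h; case: (prev c (inr i0)) => // j _; by exists j.
have pmM : perfect_matching I J M.
  split.
  - move=> [i0 j0]; rewrite !inE /= => /andP[h /eqP e]; by rewrite h -e mem_next h.
  - move=> i0; rewrite inE => h; case: (nxt i0 h) => j0 e.
    rewrite (_ : [set j | (i0, j) \in M] = [set j0]) ?cards1 //.
    by apply/setP => j; rewrite !inE /= h e /= eq_sym.
  - move=> j0; rewrite inE => h; case: (prvr j0 h) => i0 e.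
    rewrite (_ : [set i | (i, j0) \in M] = [set i0]) ?cards1 //.
    apply/setP => i1; rewrite !inE /=; apply/idP/idP.
      move=> /andP[hi /eqP hn]; have := prev_next Uc (inl i1).
      by rewrite hn e => -[->].
    by move/eqP => ->; rewrite -e mem_prev h /= next_prev.
have pmM' : perfect_matching I J M'.
  split.
  - move=> [i0 j0]; rewrite !inE /= => /andP[h /eqP e]; by rewrite h -e mem_prev h.
  - move=> i0; rewrite inE => h; case: (prv i0 h) => j0 e.
    rewrite (_ : [set j | (i0, j) \in M'] = [set j0]) ?cards1 //.
    by apply/setP => j; rewrite !inE /= h e /= eq_sym.
  - move=> j0; rewrite inE => h; case: (nxtr j0 h) => i0 e.
    rewrite (_ : [set i | (i, j0) \in M'] = [set i0]) ?cards1 //.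
    apply/setP => i1; rewrite !inE /=; apply/idP/idP.
      move=> /andP[hi /eqP hn]; have := next_prev Uc (inl i1).
      by rewrite hn e => -[->].
    by move/eqP => ->; rewrite -e mem_next h /= prev_next.
have sM : M \subset A.
  apply/subsetP => -[i0 j0]; rewrite inE /= => /andP[h /eqP hn].
  by have := next_cycle Cc h; rewrite hn.
have sM' : M' \subset B.
  apply/subsetP => -[i0 j0]; rewrite inE /= => /andP[h /eqP hn].
  by have := prev_cycle Cc h; rewrite hn.
have EM := HC I J M M' sM sM' pmM pmM'.
case: (nxt i ic) => j e.
have : (i, j) \in M by rewrite inE /= ic e eqxx.
rewrite EM inE /= ic /= => /eqP e'.
by move: (next_neq_prev Uc Sc ic); rewrite e e' eqxx.
Qed.

Lemma noback A B v w : compatible A B -> darr A B v w -> ~~ darr A B w v ->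
  ~~ connect (darr A B) w v.
Proof.
move=> HC Hvw Hwv; apply/negP => /connectP [p Hp Hl].
case/shortenP: Hp Hl => p' Hp' Up' _ Hl.
have Cc : cycle (darr A B) (w :: p') by rewrite /= rcons_path Hp' -Hl Hvw.
have [i ic] : exists i, inl i \in w :: p'.
  case: v Hvw Hwv Hl => [i|j] Hvw Hwv Hl; first by exists i; rewrite Hl mem_last.
  by case: w Hvw {Cc Hp' Up' Hwv Hl} => [i|j'] // _; exists i; rewrite inE eqxx.
case: p' Hp' Up' Hl Cc ic => [|y [|z q]] Hp' Up' Hl Cc ic.
- by move: Hvw; rewrite /= in Hl; rewrite Hl darr_irr.
- by move: Hp'; rewrite /= in Hl; rewrite /= -Hl andbT (negbTE Hwv).
by apply: (cycle_incompat HC Up' Cc _ ic).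
Qed.

End G.

Lemma sum_eqb (d : nat) (P : pred 'I_d) b : \sum_(k | P k) ((k == b) : nat) = P b.
Proof.
case Pb: (P b).
  rewrite (bigD1 b) //= eqxx big1 // => k /andP[_ /negbTE ->] //.
rewrite big1 // => k Pk; case: eqP => // e; by rewrite -e Pk in Pb.
Qed.

Lemma count_ineq n d (G1 G2 : graph n d) (a b : 'I_d) (S : {set vert n d}) :
  (forall k, rdeg G1 k + (k == b) = rdeg G2 k + (k == a)) -> connected G2 ->
  S != set0 -> S != setT ->
  (forall i j, (i, j) \in G1 -> inr j \in S -> inl i \in S) ->
  (forall i j, (i, j) \in G2 -> inl i \in S -> inr j \in S) ->
  #|S| + (inr a \in S) <= inside G1 S + (inr b \in S).
Proof.
move=> HRD HG2 S0 ST pc pc2.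
have e1 : inside G1 S = \sum_(k | inr k \in S) rdeg G1 k.
  rewrite -(card_right G1 (fun k => inr k \in S)); apply: eq_card => -[i j].
  rewrite !inE /=; case h: ((i, j) \in G1) => //=.
  by case hj: (inr j \in S); rewrite ?andbT ?andbF // (pc _ _ h hj).
have e2 : touch G2 S = \sum_(k | inr k \in S) rdeg G2 k.
  rewrite -(card_right G2 (fun k => inr k \in S)); apply: eq_card => -[i j].
  rewrite !inE /=; case h: ((i, j) \in G2) => //=.
  by case hi: (inl i \in S) => //=; rewrite (pc2 _ _ h hi).
have e3 : \sum_(k | inr k \in S) (rdeg G1 k + (k == b)) =
          \sum_(k | inr k \in S) (rdeg G2 k + (k == a)) by apply: eq_bigr.
rewrite !big_split /= !sum_eqb -e1 -e2 in e3.
by rewrite e3 leq_add2r; apply: touch_ge.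
Qed.

Lemma nat_b x y (p q : bool) : 0 < x -> x + q <= y + p -> y <= x - 1 -> p.
Proof. by case: p; case: q => //= h1 h2 h3; exfalso; lia. Qed.

Lemma nat_contra2 x y (p q : bool) : 0 < x -> x.+1 + p <= y + q -> y <= x - 1 -> False.
Proof. by case: p; case: q => //= h1 h2 h3; lia. Qed.

Section Pair.
Variables (n d : nat) (A B : graph n d) (a b : 'I_d).
Hypotheses (HA : connected A) (HB : connected B)
  (cA : #|A| = (n + d).-1) (cB : #|B| = (n + d).-1) (HAB : compatible A B)
  (HRD : forall k, rdeg A k + (k == b) = rdeg B k + (k == a)).

Lemma reach_all v : connect (darr A B) (inr b) v.
Proof.
pose S := [set u | connect (darr A B) u v].
have [ST|ST] := eqVneq S setT.
  have : inr b \in S by rewrite ST inE.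
  by rewrite inE.
have S0 : S != set0 by apply/set0Pn; exists v; rewrite inE connect0.
have pc : forall i j, (i, j) \in A -> inr j \in S -> inl i \in S.
  move=> i j h; rewrite !inE => h2; apply: connect_trans h2; exact: connect1.
have pc2 : forall i j, (i, j) \in B -> inl i \in S -> inr j \in S.
  move=> i j h; rewrite !inE => h2; apply: connect_trans h2; exact: connect1.
have h := count_ineq HRD HB S0 ST pc pc2.
have h' := inside_le HA cA S0 ST.
have h0 : 0 < #|S| by rewrite card_gt0.
have := nat_b h0 h h'.
by rewrite inE.
Qed.

Lemma p2a i : (i, b) \in A -> (i, b) \in B.
Proof.
move=> h; apply/negPn/negP => hB.
have := noback (v := inl i) (w := inr b) HAB h hB.
by rewrite reach_all.
Qed.

Lemma p2b i k : (i, b) \in A -> (i, k) \in B -> (i, k) \in A.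
Proof.
move=> hA hB; apply/negPn/negP => hk.
have := noback (v := inr k) (w := inl i) HAB hB hk.
have c1 : connect (darr A B) (inl i) (inr b) by apply: connect1.
by rewrite (connect_trans c1 (reach_all _)).
Qed.

Lemma common_edge i : exists k, ((i, k) \in A) && ((i, k) \in B).
Proof.
case: (boolP [exists k, ((i, k) \in A) && ((i, k) \in B)]).
  by case/existsP => k h; exists k.
move/existsPn => Hno.
case: (ledge i b HA) => k kA; case: (ledge i b HB) => m mB.
have kB : (i, k) \notin B by move: (Hno k); rewrite kA.
have mA : (i, m) \notin A by move: (Hno m); rewrite mB andbT.
pose S := [set u | connect (darr A B) (inl i) u].
have nb : forall j, (i, j) \in B -> inr j \notin S.
  move=> j hj; rewrite inE; apply: (noback (v := inr j) (w := inl i) HAB hj).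
  by move: (Hno j); rewrite hj andbT.
have mS := nb m mB.
have ST : S != setT by apply/eqP => e; move: mS; rewrite e inE.
have iS : inl i \in S by rewrite inE connect0.
have kS : inr k \in S by rewrite inE connect1.
have S0 : S != set0 by apply/set0Pn; exists (inl i).
pose S' := S :\ inl i.
have S'0 : S' != set0 by apply/set0Pn; exists (inr k); rewrite in_setD1 kS andbT.
have S'T : S' != setT.
  apply/eqP => e; have := in_setT (inr m : vert n d); rewrite -e in_setD1 => /andP[_ h].
  by rewrite h in mS.
have hin : inside B S = inside B S'.
  apply: eq_card => -[i' j']; rewrite !inE /=.
  case hB': ((i', j') \in B) => //=.
  have [ei|ne] := eqVneq i' i.
    move: ei hB' => -> hB'.
    by have := nb j' hB'; rewrite inE => /negbTE ->; rewrite andbF eqxx.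
  by rewrite (_ : (inl i' != inl i :> vert n d) = true) //; apply/eqP => -[]; apply/eqP.
have HRD' : forall k, rdeg B k + (k == a) = rdeg A k + (k == b) by move=> k'; rewrite HRD.
have pc : forall i0 j, (i0, j) \in B -> inr j \in S -> inl i0 \in S.
  move=> i0 j h; rewrite !inE => h2; apply: connect_trans h2 _; exact: connect1.
have pc2 : forall i0 j, (i0, j) \in A -> inl i0 \in S -> inr j \in S.
  move=> i0 j h; rewrite !inE => h2; apply: connect_trans h2 _; exact: connect1.
have h1 := count_ineq HRD' HA S0 ST pc pc2.
have h2 := inside_le HB cB S'0 S'T.
have h3 : #|S| = #|S'|.+1 by rewrite (cardsD1 (inl i)) iS.
have h4 : 0 < #|S'| by rewrite card_gt0.
rewrite hin h3 in h1.
by case: (nat_contra2 h4 h1 h2).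
Qed.

End Pair.

Lemma p3 n d (A B : graph n d) (a b : 'I_d) i :
  connected A -> connected B -> #|A| = (n + d).-1 -> #|B| = (n + d).-1 ->
  compatible A B -> compatible B A ->
  (forall k, rdeg A k + (k == b) = rdeg B k + (k == a)) -> a != b ->
  (i, b) \in A -> (i, a) \in B -> False.
Proof.
move=> HA HB cA cB HAB HBA HRD ab hb ha.
have HRD' : forall k, rdeg B k + (k == a) = rdeg A k + (k == b) by move=> k; rewrite HRD.
have rev : forall x y, connect (darr B A) x y = connect (darr A B) y x.
  move=> x y; rewrite (eq_connect (e' := [rel u v | darr A B v u]) (@darr_swap _ _ A B)).
  by rewrite connect_rev.
have sub : forall l r, (l, r) \in A -> (l, r) \in B.
  move=> l r h; apply/negPn/negP => hn.
  have := noback (v := inl l) (w := inr r) HAB h hn.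
  have c1 : connect (darr A B) (inr r) (inr a) by rewrite -rev; apply: (reach_all HB HA cB HRD').
  have c2 : connect (darr A B) (inr a) (inl i) by apply: connect1.
  have c3 : connect (darr A B) (inl i) (inr b) by apply: connect1.
  have c4 := reach_all HA HB cA HRD (inl l).
  by rewrite (connect_trans c1 (connect_trans c2 (connect_trans c3 c4))).
have : rdeg A a <= rdeg B a.
  apply: subset_leq_card; apply/subsetP => i'; rewrite !inE; exact: sub.
by have := HRD a; rewrite eqxx (negbTE ab) addn0 addn1 => ->; rewrite ltnn.
Qed.

Lemma sum_eqb1 (d : nat) (b : 'I_d) : (\sum_(k < d) ((k == b) : nat) = 1)%N.
Proof. by rewrite (bigD1 b) //= eqxx big1 // => k /negbTE ->. Qed.

Local Open Scope ring_scope.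
Unset Implicit Arguments.

Theorem mainTheorem13 (R : realFieldType) (n d : nat) (GG : {set graph n d})
  (t : 'I_d -> nat) (T : 'I_d -> graph n d) :
  (0 < d)%N -> (2 <= n)%N -> encodes_fms GG ->
  lattice_pt (n - 2) t ->
  (* T j is the cell of position t + e_j, i.e. the tree of GG with
     RD(T j) = t + e_j + 1 *)
  (forall j, T j \in GG /\ (forall k, RD (T j) k = (add_unit t j k).+1)) ->
  exists x : 'rV[R]_d,
    (forall y : 'rV[R]_d, (forall j, in_cell (T j) y) <-> y = x) /\
    (exists z : 'I_d -> int, forall j, x ord0 j = (z j)%:~R).
Proof.
move=> d0 n2 [Htree Hlink Hcomp] Ht HT.
have conn : forall j, connected (T j) by move=> j; exact: (Htree _ (HT j).1).1.
have comp : forall j l, compatible (T j) (T l) by move=> j l; apply: Hcomp; [exact: (HT j).1|exact: (HT l).1].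
have rdE : forall j k, rdeg (T j) k = (t k + (k == j)).+1.
  by move=> j k; have := (HT j).2 k; rewrite /RD /add_unit.
have card : forall j, #|T j| = (n + d).-1.
  move=> j; rewrite card_graph (eq_bigr (fun k => t k + (k == j) + 1)%N); last first.
    by move=> k _; rewrite rdE addn1.
  rewrite !big_split /= sum_eqb /= sum1_card card_ord.
  rewrite /lattice_pt in Ht; rewrite Ht; lia.
have rd : forall j l k, (rdeg (T j) k + (k == l) = rdeg (T l) k + (k == j))%N.
  by move=> j l k; rewrite !rdE; lia.
have j0 : 'I_d := Ordinal d0.
have claim : forall i, exists j : 'I_d,
    (forall k, (i, k) \in T j -> k = j) /\ (forall l, (i, j) \in T l).
  move=> i.
  case: (ledge i j0 (conn j0)) => k0 hk0.
  have Pk0 : (i, k0) \in T k0.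
    have [e|ne] := eqVneq k0 j0; first by rewrite e in hk0 *.
    exact: (p2a (conn _) (conn _) (card _) (comp _ _) (rd j0 k0) hk0).
  pose N j := #|[set k | (i, k) \in T j]|.
  case: (@arg_minnP _ k0 (fun j => (i, j) \in T j) N Pk0) => j Pj Hmin.
  have uniqj : forall k, (i, k) \in T j -> k = j.
    move=> k hk; apply/eqP; apply/negPn/negP => kj.
    have Pk := p2a (conn _) (conn _) (card _) (comp _ _) (rd j k) hk.
    have sub := fun m => p2b (conn _) (conn _) (card _) (comp _ _) (rd j k) (k := m) hk.
    have njk : (i, j) \notin T k.
      apply/negP => hjk.
      by apply: (p3 (conn _) (conn _) (card _) (card _) (comp _ _) (comp _ _) (rd j k) _ hk hjk); rewrite eq_sym.
    have : (N k < N j)%N.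
      apply: proper_card; apply/properP; split.
        by apply/subsetP => m; rewrite !inE; exact: sub.
      by exists j; rewrite !inE.
    by rewrite ltnNge Hmin.
  exists j; split => // l.
  have [->//|ne] := eqVneq l j.
  case: (common_edge (conn l) (conn j) (card j) (comp l j) (rd l j) i) => m /andP[h1 h2].
  by rewrite -(uniqj m h2).
case: (fin_all_exists claim) => sigma Hs.
pose cnt k := (\sum_(i < n) ((sigma i == k) : nat))%N.
exists (\row_k (cnt k)%:R); split; last first.
  by exists (fun k => (cnt k)%:Z) => k; rewrite mxE.
move=> y; split; last first.
  move=> -> l; exists (fun i k => ((sigma i == k) : nat)%:R); split.
  - by move=> i k; rewrite ler0n.
  - move=> i k hk; case: eqP => // e; by rewrite -e (Hs i).2 in hk.
  - by move=> i; rewrite -natr_sum (eq_bigr (fun k => ((k == sigma i) : nat))) ?sum_eqb1 // => k _; rewrite eq_sym.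
  - by move=> k; rewrite mxE natr_sum.
move=> Hy.
have low : forall k, (cnt k)%:R <= y ord0 k.
  move=> k; case: (Hy k) => lam [l0 l1 l2 l3].
  rewrite l3 natr_sum; apply: ler_sum => i _.
  have [e|ne] := eqVneq (sigma i) k.
    have H1 : lam i k = 1.
      rewrite -(l2 i) (bigD1 k) //= big1 ?addr0 // => k' nk; apply: l1; apply/negP => h.
      rewrite -e in h; have := (Hs i).1 k' h; rewrite e => ek; by rewrite ek eqxx in nk.
    by rewrite H1.
  exact: l0.
have sumy : \sum_k y ord0 k = n%:R.
  case: (Hy j0) => lam [l0 l1 l2 l3].
  rewrite (eq_bigr _ (fun k _ => l3 k)) exchange_big /=.
  rewrite (eq_bigr (fun _ => 1)) => [|i _]; last exact: l2.
  by rewrite sumr_const card_ord.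
have sumx : \sum_k (cnt k)%:R = n%:R :> R.
  rewrite -natr_sum; congr (_%:R); rewrite /cnt exchange_big /=.
  rewrite (eq_bigr (fun _ => 1%N)) => [|i _]; last by rewrite (eq_bigr (fun k => ((k == sigma i) : nat))) ?sum_eqb1 // => k _; rewrite eq_sym.
  by rewrite sum_nat_const card_ord muln1.
apply/rowP => k; rewrite mxE.
have Hnn : forall k, predT k -> 0 <= y ord0 k - (cnt k)%:R.
  by move=> k' _; rewrite subr_ge0 low.
have Hs0 : \sum_(k | predT k) (y ord0 k - (cnt k)%:R) = 0.
  by rewrite sumrB sumy sumx subrr.
have := @psumr_eq0P _ _ _ _ Hnn Hs0 k isT.
by move/eqP; rewrite subr_eq0 => /eqP.
Qed.
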